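(* Let $\alpha$ and $\beta$ be 5-cycles in the symmetric group $S_6$ such that $\mathrm{Supp}(\alpha) \neq \mathrm{Supp}(\beta)$. Then one of the permutations $\alpha\beta$, $\alpha\beta^3$, $\alpha^2\beta$ is not a 5-cycle.
   Context: Permutations act on the right and are composed left to right, i.e. $i(\alpha\beta) = (i\alpha)\beta$. $\mathrm{Supp}(\alpha)$ denotes the set of points moved by $\alpha$. The lemma is used in showing that the d-identity $(x_1^{12}=1)\vee(x_2^{30}=1)\vee((x_1x_1^{x_2})^{12}=1)\vee((x_1x_1^{3x_2})^{12}=1)\vee((x_1^2x_1^{x_2})^{12}=1)$ holds in the alternating group $A_6$ (here $x_1^{x_2}=x_2^{-1}x_1x_2$). *)

(* Defs.v *)
From mathcomp Require Import all_boot all_fingroup.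
Set Implicit Arguments. Unset Strict Implicit. Unset Printing Implicit Defensive.
Local Open Scope group_scope.

Definition Supp n (s : 'S_n) : {set 'I_n} := [set i | s i != i].

Definition is_cycle_of_len n (k : nat) (s : 'S_n) : bool :=
  (#|Supp s| == k) && [exists i, porbit s i == Supp s].

(* Main.v *)
Require Import Defs.
From mathcomp Require Import all_boot all_fingroup.
Local Open Scope group_scope.

Definition ap (l : seq nat) (n : nat) : nat := nth n l n.
Definition cd (s : 'S_6) : seq nat := [seq val (s i) | i <- enum 'I_6].
Definition mul (l m : seq nat) : seq nat := [seq ap m (ap l n) | n <- iota 0 6].

Lemma ap_cd (s : 'S_6) (i : 'I_6) : ap (cd s) (val i) = val (s i).
Proof.
rewrite /ap /cd (nth_map i) ?size_enum_ord ?ltn_ord //; have E : nth i (enum 'I_6) i = i by exact: nth_ord_enum.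
by rewrite E.
Qed.

Lemma cdM (a b : 'S_6) : cd (a * b) = mul (cd a) (cd b).
Proof.
rewrite /mul -val_enum_ord -map_comp /cd; apply: eq_map => i /=.
by rewrite !ap_cd permM.
Qed.

Lemma card6 (Q : 'I_6 -> bool) (Q' : nat -> bool) :
  (forall i, Q i = Q' (val i)) -> #|[set i | Q i]| = count Q' (iota 0 6).
Proof.
move=> H; rewrite cardsE cardE /enum_mem size_filter -enumT -val_enum_ord count_map.
by apply: eq_count => i /=; rewrite -H.
Qed.

Lemma has6 (Q : 'I_6 -> bool) (Q' : nat -> bool) :
  (forall i, Q i = Q' (val i)) -> [exists i, Q i] = has Q' (iota 0 6).
Proof.
move=> H; rewrite -val_enum_ord has_map; apply/existsP/hasP.
  by move=> [i Hi]; exists i; rewrite ?mem_enum //= -H.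
by move=> [i _ /= Hi]; exists i; rewrite H.
Qed.

Lemma all6 (Q : 'I_6 -> bool) (Q' : nat -> bool) :
  (forall i, Q i = Q' (val i)) -> [forall i, Q i] = all Q' (iota 0 6).
Proof.
move=> H; rewrite -val_enum_ord all_map; apply/forallP/allP.
  by move=> Hi i _ /=; rewrite -H.
by move=> Hi i; rewrite H; apply: Hi; rewrite mem_enum.
Qed.

Lemma seteq_forall (A B : {set 'I_6}) : (A == B) = [forall y, (y \in A) == (y \in B)].
Proof.
apply/eqP/forallP => [-> y|H]; first by rewrite eqxx.
by apply/setP => y; apply/eqP/H.
Qed.

Lemma iter_cd (s : 'S_6) k (x : 'I_6) : val (iter k s x) = iter k (ap (cd s)) (val x).
Proof. by elim: k => //= k IH; rewrite -IH ap_cd. Qed.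

Definition orb (s : 'S_6) (x : 'I_6) : {set 'I_6} := [set iter i s x | i : 'I_6].

Lemma porbit_orb (s : 'S_6) (x : 'I_6) : porbit s x = orb s x.
Proof.
apply/setP => y; rewrite porbit_traject; apply/idP/idP.
  move/trajectP => [i Hi ->]; apply/imsetP.
  have Hi6 : i < 6.
    apply: leq_trans Hi _; have := max_card (mem (porbit s x)); by rewrite card_ord.
  by exists (Ordinal Hi6).
move/imsetP => [i _ ->]; rewrite -porbit_traject -permX; exact: mem_porbit.
Qed.

Definition cyc5L (l : seq nat) : bool :=
  (count (fun n => ap l n != n) (iota 0 6) == 5) &&
  has (fun x => all (fun y => has (fun k => iter k (ap l) x == y) (iota 0 6) == (ap l y != y))
                    (iota 0 6)) (iota 0 6).

Lemma cyc5E (s : 'S_6) : is_cycle_of_len 5 s = cyc5L (cd s).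
Proof.
rewrite /is_cycle_of_len /cyc5L /Supp; congr (_ && _).
  by rewrite (@card6 _ (fun n => ap (cd s) n != n)) // => i; rewrite ap_cd.
apply: has6 => x; rewrite porbit_orb seteq_forall; apply: all6 => y.
rewrite inE ap_cd; congr (_ == _).
rewrite /orb; apply/imsetP/idP.
  move=> [k _ ->]; rewrite -val_enum_ord has_map; apply/hasP; exists k; first by rewrite mem_enum.
  by rewrite /= iter_cd.
rewrite -val_enum_ord has_map => /hasP [k _ /= /eqP Hk]; exists k => //.
by apply: val_inj; rewrite iter_cd.
Qed.

Definition sameSupp (l m : seq nat) : bool :=
  all (fun n => (ap l n != n) == (ap m n != n)) (iota 0 6).

Lemma sameSuppE (a b : 'S_6) : sameSupp (cd a) (cd b) -> Supp a = Supp b.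
Proof.
move=> /allP H; apply/setP => i; rewrite !inE.
have := H (val i); rewrite mem_iota ltn_ord !ap_cd => /(_ isT) /eqP; exact.
Qed.

Definition C5L : seq (seq nat) := [seq l <- permutations (iota 0 6) | cyc5L l].

Lemma cd_in (s : 'S_6) : is_cycle_of_len 5 s -> cd s \in C5L.
Proof.
rewrite cyc5E => H; rewrite mem_filter H /= mem_permutations.
have U : uniq (cd s).
  rewrite /cd map_inj_uniq ?enum_uniq // => i j /val_inj; exact: perm_inj.
have Sub : {subset cd s <= iota 0 6}.
  by move=> x /mapP [i _ ->]; rewrite mem_iota ltn_ord.
have Hs : size (iota 0 6) <= size (cd s) by rewrite size_map size_enum_ord size_iota.
have [_ E] := uniq_min_size U Sub Hs.
exact: uniq_perm U (iota_uniq 0 6) E.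
Qed.

Definition goodL (l m : seq nat) : bool :=
  sameSupp l m || ~~ cyc5L (mul l m) || ~~ cyc5L (mul l (mul m (mul m m)))
  || ~~ cyc5L (mul (mul l l) m).

Lemma all_good : let L := C5L in all (fun l => all (goodL l) L) L.
Proof. by vm_compute. Qed.

Theorem lemma5 (a b : 'S_6) :
  is_cycle_of_len 5 a -> is_cycle_of_len 5 b -> Supp a != Supp b ->
  ~~ is_cycle_of_len 5 (a * b) \/ ~~ is_cycle_of_len 5 (a * b ^+ 3) \/
  ~~ is_cycle_of_len 5 (a ^+ 2 * b).
Proof.
move=> Ha Hb Hab.
have := allP (allP all_good _ (cd_in _ Ha)) _ (cd_in _ Hb).
rewrite /goodL -!cdM -!cyc5E.
have -> : b * (b * b) = b ^+ 3 by rewrite expgSS expg2.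
have -> : a * a = a ^+ 2 by rewrite expg2.
case: (boolP (sameSupp (cd a) (cd b))) => [/sameSuppE E|_]; first by rewrite E eqxx in Hab.
by rewrite /= -!orbA => /or3P [H|H|H]; [left|right;left|right;right].
Qed.
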